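(* Let $X$ be a finite set of distinct points in a real Euclidean affine space, representing interacting particles, such that for each ordered pair of distinct points $x,y\in X$ the force on $x$ due to $y$ is $\varphi_{x,y}\overrightarrow{xy}$ with $\varphi_{x,y}\in\mathbb{R}$, and set $\varphi_{x,x}=-\sum_{y\neq x}\varphi_{x,y}$. The following are equivalent: (i) $X$ is an equilibrium, i.e. $\sum_{y\neq x}\varphi_{x,y}\overrightarrow{xy}=\overrightarrow{O}$ for every $x\in X$; (ii) $\sum_{z\in X}\varphi_{x,z}\left(\overrightarrow{xy}^2-\overrightarrow{yz}^2+\overrightarrow{zx}^2\right)=0$ for all $x,y\in X$; (iii) $\sum_{(z,w)\in X\times X}\varphi_{x,z}\varphi_{y,w}\,\overrightarrow{zw}^2=0$ for all $x,y\in X$.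
   Context: The square of a vector denotes its inner product with itself, so $\overrightarrow{xy}^2$ is the squared distance between $x$ and $y$. *)

(* Defs.v *)
From mathcomp Require Import all_boot all_order all_algebra.
From mathcomp Require Import reals.
Set Implicit Arguments. Unset Strict Implicit. Unset Printing Implicit Defensive.
Import Order.TTheory GRing.Theory Num.Theory.
Local Open Scope ring_scope.

(* The real Euclidean affine space is modelled as 'rV[R]_n with R : realType
   and the standard inner product; the vector xy is (y - x). *)

Definition dotv (R : realType) (n : nat) (u v : 'rV[R]_n) : R := (u *m v^T) 0 0.

Definition sqd (R : realType) (n : nat) (x y : 'rV[R]_n) : R := dotv (y - x) (y - x).

Definition phiext (R : realType) (I : finType) (phi : I -> I -> R) (x y : I) : R :=
  if x == y then - \sum_(z | z != x) phi x z else phi x y.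

Definition equilibrium (R : realType) (n : nat) (I : finType)
  (p : I -> 'rV[R]_n) (phi : I -> I -> R) : Prop :=
  forall x : I, \sum_(y | y != x) phi x y *: (p y - p x) = 0.

(* Main.v *)
Require Import Defs.
From mathcomp Require Import all_boot all_order all_algebra.
From mathcomp Require Import reals.
From mathcomp Require Import ring.
Import Order.TTheory GRing.Theory Num.Theory.
Local Open Scope ring_scope.

Section Aux.
Variables (R : realType) (n : nat).
Implicit Types u v w : 'rV[R]_n.

Lemma dotvE u v : dotv u v = \sum_i u 0 i * v 0 i.
Proof. by rewrite /dotv mxE; apply: eq_bigr => i _; rewrite mxE. Qed.

Lemma dotvC u v : dotv u v = dotv v u.
Proof. by rewrite !dotvE; apply: eq_bigr => i _; rewrite mulrC. Qed.

Lemma dotvDl u v w : dotv (u + v) w = dotv u w + dotv v w.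
Proof. by rewrite !dotvE -big_split; apply: eq_bigr => i _; rewrite mxE mulrDl. Qed.

Lemma dotvNl u w : dotv (- u) w = - dotv u w.
Proof. by rewrite !dotvE -sumrN; apply: eq_bigr => i _; rewrite mxE mulNr. Qed.

Lemma dotvBl u v w : dotv (u - v) w = dotv u w - dotv v w.
Proof. by rewrite dotvDl dotvNl. Qed.

Lemma dotvZl a u w : dotv (a *: u) w = a * dotv u w.
Proof. by rewrite !dotvE mulr_sumr; apply: eq_bigr => i _; rewrite mxE mulrA. Qed.

Lemma dotv0l w : dotv 0 w = 0.
Proof. by rewrite dotvE big1 // => i _; rewrite mxE mul0r. Qed.

Lemma dotv_suml (I : finType) (F : I -> 'rV[R]_n) w :
  dotv (\sum_i F i) w = \sum_i dotv (F i) w.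
Proof.
rewrite dotvE (eq_bigr (fun i => \sum_j F j 0 i * w 0 i)); last first.
  by move=> i _; rewrite summxE mulr_suml.
by rewrite exchange_big; apply: eq_bigr => j _; rewrite dotvE.
Qed.

Lemma dotv_eq0 u : dotv u u = 0 -> u = 0.
Proof.
rewrite dotvE => H; apply/matrixP => i j; rewrite mxE ord1.
have := psumr_eq0P (P:=predT) (fun k _ => sqr_ge0 (u 0 k)) H.
move/(_ j isT).
by move/eqP; rewrite mulf_eq0 orbb => /eqP.
Qed.

Lemma sqd_ii (x y z : 'rV[R]_n) :
  sqd x y - sqd y z + sqd z x = 2 * dotv (x - z) (x - y).
Proof.
rewrite /sqd !dotvE -sumrB -big_split mulr_sumr; apply: eq_bigr => i _.
rewrite !mxE /=; ring.
Qed.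

Lemma sqd_iii (z w : 'rV[R]_n) : sqd z w = dotv z z + dotv w w - 2 * dotv w z.
Proof.
rewrite /sqd !dotvE mulr_sumr -big_split -sumrB; apply: eq_bigr => i _.
rewrite !mxE /=; ring.
Qed.
End Aux.

Theorem corollary3p2 (R : realType) (n : nat) (I : finType)
  (p : I -> 'rV[R]_n) (p_inj : injective p) (phi : I -> I -> R) :
  [<-> equilibrium p phi;
       forall x y : I,
         \sum_(z : I) phiext phi x z
            * (sqd (p x) (p y) - sqd (p y) (p z) + sqd (p z) (p x)) = 0;
       forall x y : I,
         \sum_(zw : I * I) phiext phi x zw.1 * phiext phi y zw.2
            * sqd (p zw.1) (p zw.2) = 0].
Proof.
set psi := phiext phi.
have rs x : \sum_z psi x z = 0.
  rewrite (bigD1 x) //= {1}/psi /phiext eqxx.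
  rewrite (eq_bigr (phi x)); first by rewrite addNr.
  by move=> z zx; rewrite /psi /phiext eq_sym (negbTE zx).
have K x (c : R) (g : I -> R) :
    \sum_z psi x z * (c + g z) = \sum_z psi x z * g z.
  by rewrite (eq_bigr (fun z => psi x z * c + psi x z * g z)) ?big_split /=
     -?mulr_suml ?rs ?mul0r ?add0r // => z _; rewrite mulrDr.
set E := fun x => \sum_z psi x z *: p z.
have dE x v : \sum_z psi x z * dotv (p z) v = dotv (E x) v.
  by rewrite dotv_suml; apply: eq_bigr => z _; rewrite dotvZl.
have eqE : equilibrium p phi <-> forall x, E x = 0.
  have -> : equilibrium p phi <-> forall x, \sum_z psi x z *: (p z - p x) = 0.
    have e0 x : \sum_z psi x z *: (p z - p x) = \sum_(y | y != x) phi x y *: (p y - p x).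
      rewrite (bigD1 x) //= subrr scaler0 add0r.
      by apply: eq_bigr => z zx; rewrite /psi /phiext eq_sym (negbTE zx).
    by split=> H x; rewrite ?e0 // -e0.
  have e x : \sum_z psi x z *: (p z - p x) = E x.
    rewrite (eq_bigr (fun z => psi x z *: p z - psi x z *: p x)); last first.
      by move=> z _; rewrite scalerBr.
    by rewrite sumrB -scaler_suml rs scale0r subr0.
  by split=> H x; [rewrite -e | rewrite e]; apply: H.
have H2 x y : \sum_z psi x z * (sqd (p x) (p y) - sqd (p y) (p z) + sqd (p z) (p x))
    = - 2 * dotv (E x) (p x - p y).
  rewrite (eq_bigr (fun z => psi x z * (2 * dotv (p x) (p x - p y) +
        (-2 * dotv (p z) (p x - p y))))); last first.
    by move=> z _; rewrite sqd_ii dotvBl; congr (_ * _); ring.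
  rewrite K -dE mulr_sumr; apply: eq_bigr => z _; ring.
have H3 x y : \sum_(zw : I * I) psi x zw.1 * psi y zw.2 * sqd (p zw.1) (p zw.2)
    = - 2 * dotv (E x) (E y).
  rewrite -(pair_big predT predT (fun z w => psi x z * psi y w * sqd (p z) (p w))) /=.
  rewrite (eq_bigr (fun z => psi x z * (\sum_w psi y w * dotv (p w) (p w) +
       (-2 * dotv (E y) (p z))))); last first.
    move=> z _; under eq_bigr do rewrite -mulrA; rewrite -mulr_sumr; congr (_ * _).
    rewrite (eq_bigr (fun w => psi y w * (dotv (p z) (p z) +
       (dotv (p w) (p w) - 2 * dotv (p w) (p z))))); last first.
      by move=> w _; rewrite sqd_iii addrA.
    rewrite K (eq_bigr (fun w => psi y w * dotv (p w) (p w) +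
       (-2) * (psi y w * dotv (p w) (p z)))); last first.
      by move=> w _; ring.
    by rewrite big_split /= -mulr_sumr dE.
  rewrite K (eq_bigr (fun z => -2 * (psi x z * dotv (p z) (E y)))); last first.
    by move=> z _; rewrite dotvC; ring.
  by rewrite -mulr_sumr dE.
tfae.
- move/eqE=> H x y; by rewrite H2 H dotv0l mulr0.
- move=> H x y; rewrite H3.
  have h w : dotv (E x) (p w) = dotv (E x) (p x).
    have := H x w; rewrite H2 => /eqP; rewrite mulf_eq0 oppr_eq0 pnatr_eq0 /=.
    rewrite dotvC dotvBl dotvC [dotv (p w) _]dotvC => hw.
    by apply/eqP; rewrite eq_sym -subr_eq0 hw.
  rewrite dotvC -dE (eq_bigr (fun w => psi y w * dotv (E x) (p x))); last first.
    by move=> w _; rewrite dotvC h.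
  by rewrite -mulr_suml rs mul0r mulr0.
- move=> H; apply/eqE => x; apply: dotv_eq0.
  have /eqP := H x x; rewrite H3 mulf_eq0 oppr_eq0 pnatr_eq0 /=.
  by move/eqP.
Qed.
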